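(* Let $\mathcal A$ be a $K$-armed bandit algorithm which at each round $t$ draws $A_t$ according to a probability vector $x_t=x_t(\mathcal A)$ determined by the past, i.e. $\mathbb P(A_t=a\mid\mathcal F_{t-1})=x_{t,a}$, and let $\overline x_T=\frac1T\sum_{t=1}^Tx_t$. Suppose there exists $\varepsilon=\varepsilon_T>0$ with $T\varepsilon\to\infty$ and $\min_{a\in[K]}\overline x_{T,a}\ge\varepsilon$. Suppose additionally that there exists a deterministic probability vector $x^\star_T$ with all coordinates positive such that $\overline x_{T,a}/x^\star_{T,a}\to1$ in probability for every arm $a\in[K]$. Then $\mathcal A$ is stable.
   Context: $\mathcal F_{t-1}$ is the sigma-field generated by the history up to round $t-1$. $n_{a,T}=\sum_{t=1}^T\mathbb I\{A_t=a\}$. An algorithm is stable if for every arm $a$ there exist non-random scalars $n^\star_{a,T}$ (possibly depending on the problem parameters and $T$) such that $n_{a,T}/n^\star_{a,T}\to1$ in probability and $n^\star_{a,T}\to\infty$ as $T\to\infty$. *)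

(* Defs.v *)
From HB Require Import structures.
From mathcomp Require Import all_boot all_order all_algebra.
From mathcomp Require Import all_classical all_reals all_analysis.
Set Implicit Arguments. Unset Strict Implicit. Unset Printing Implicit Defensive.
Import Order.TTheory GRing.Theory Num.Theory.
Import numFieldNormedType.Exports.
Local Open Scope classical_set_scope.
Local Open Scope ring_scope.

Section bandit_defs.
Context {R : realType} {d : measure_display} {Omega : measurableType d}.

Definition prob_vec (K : nat) (v : 'I_K -> R) : Prop :=
  (forall a, 0 <= v a) /\ \sum_(a < K) v a = 1.

Definition filtration (F : nat -> set (set Omega)) : Prop :=
  (forall t, sigma_algebra setT (F t)) /\
  (forall t, F t `<=` measurable) /\
  (forall t, F t `<=` F t.+1).

(* The bandit algorithm: rounds t = 1, 2, ...; A t is the arm drawn at round t,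
   x t is the (random) probability vector used at round t.
   - A t is F t-measurable (adapted to the history),
   - x t is a probability vector determined by the past (F (t-1)-measurable),
   - P(A_t = a | F_{t-1}) = x_{t,a}, i.e. for every B in F_{t-1},
       P(B /\ {A_t = a}) = E[1_B x_{t,a}]. *)
Definition draws_according (P : probability Omega R) (K : nat)
  (F : nat -> set (set Omega)) (A : nat -> Omega -> 'I_K)
  (x : nat -> Omega -> 'I_K -> R) : Prop :=
  filtration F /\
  (forall t a, F t [set w | A t w = a]) /\
  (forall t w, prob_vec (x t w)) /\
  (forall t a (B : set R), (0 < t)%N -> measurable B ->
      F t.-1 [set w | B (x t w a)]) /\
  (forall t a (B : set Omega), (0 < t)%N -> F t.-1 B ->
      P (B `&` [set w | A t w = a]) = (\int[P]_(w in B) (x t w a)%:E)%E).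

Definition npulls (K : nat) (A : nat -> Omega -> 'I_K) (a : 'I_K) (T : nat)
  (w : Omega) : R :=
  \sum_(1 <= t < T.+1) ((A t w == a)%:R : R).

Definition xbar (K : nat) (x : nat -> Omega -> 'I_K -> R) (T : nat)
  (w : Omega) (a : 'I_K) : R :=
  T%:R^-1 * \sum_(1 <= t < T.+1) x t w a.

Definition cvg_in_prob (P : probability Omega R) (X : nat -> Omega -> R)
  (c : R) : Prop :=
  forall e : R, 0 < e ->
    (fun T => P [set w | e <= `|X T w - c|]) @ \oo --> 0%E.

Definition stable (P : probability Omega R) (K : nat)
  (A : nat -> Omega -> 'I_K) : Prop :=
  forall a : 'I_K, exists nstar : nat -> R,
    cvg_in_prob P (fun T w => npulls A a T w / nstar T) 1 /\
    nstar @ \oo --> +oo.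

End bandit_defs.

(* Main.v *)
Require Import Defs.
From HB Require Import structures.
From mathcomp Require Import all_boot all_order all_algebra.
From mathcomp Require Import all_classical all_reals all_analysis.
From mathcomp Require Import finmap measurable_realfun.
From mathcomp Require Import ring lra.
Set Implicit Arguments. Unset Strict Implicit. Unset Printing Implicit Defensive.
Import Order.TTheory GRing.Theory Num.Theory.
Import numFieldNormedType.Exports.
Local Open Scope classical_set_scope.
Local Open Scope ring_scope.

Section expect.
Context {R : realType} {d : measure_display} {Omega : measurableType d}.
Variable (P : probability Omega R).

Definition bm (f : Omega -> R) :=
  measurable_fun setT f /\ exists M, forall w, `|f w| <= M.
Definition Ex (f : Omega -> R) := fine (\int[P]_w (f w)%:E)%E.

Lemma bm_int f : bm f -> P.-integrable setT (EFin \o f).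
Proof.
move=> [mf [M hM]]; apply: measurable_bounded_integrable => //.
  by apply: (le_lt_trans (probability_le1 P measurableT)); exact: ltry.
exists M; split; first exact: num_real.
move=> M' MM' w _; exact: (le_trans (hM w) (ltW MM')).
Qed.

Lemma ExE f : bm f -> (Ex f)%:E = (\int[P]_w (f w)%:E)%E.
Proof. by move=> bf; rewrite fineK //; exact: (integrable_fin_num _ (bm_int bf)). Qed.

Lemma bmD f g : bm f -> bm g -> bm (fun w => f w + g w).
Proof.
move=> [mf [M hM]] [mg [N hN]]; split; first exact: measurable_funD.
by exists (M + N) => w; rewrite (le_trans (ler_normD _ _)) // lerD.
Qed.

Lemma bmN f : bm f -> bm (fun w => - f w).
Proof.
move=> [mf [M hM]]; split; first exact: measurableT_comp.
by exists M => w; rewrite normrN.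
Qed.

Lemma bmB f g : bm f -> bm g -> bm (fun w => f w - g w).
Proof. by move=> bf bg; apply: bmD => //; exact: bmN. Qed.

Lemma bmM f g : bm f -> bm g -> bm (fun w => f w * g w).
Proof.
move=> [mf [M hM]] [mg [N hN]]; split; first exact: measurable_funM.
exists (M * N) => w; rewrite normrM ler_pM //.
Qed.

Lemma bm_cst c : bm (fun _ => c).
Proof. by split; [exact: measurable_cst | exists `|c|]. Qed.

Lemma bm_indic A : measurable A -> bm (\1_A : Omega -> R).
Proof.
move=> mA; split; first exact: measurable_indic.
by exists 1 => w; rewrite indicE; case: (w \in A); rewrite ?normr1 ?normr0.
Qed.

Lemma ExD f g : bm f -> bm g -> Ex (fun w => f w + g w) = Ex f + Ex g.
Proof.
move=> bf bg; apply: EFin_inj; rewrite EFinD !ExE //; last exact: bmD.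
under eq_integral do rewrite EFinD.
by rewrite (integralD_EFin _ (bm_int bf) (bm_int bg)).
Qed.

Lemma ExB f g : bm f -> bm g -> Ex (fun w => f w - g w) = Ex f - Ex g.
Proof.
move=> bf bg; apply: EFin_inj; rewrite EFinB !ExE //; last exact: bmB.
under eq_integral do rewrite EFinB.
by rewrite (integralB_EFin _ (bm_int bf) (bm_int bg)).
Qed.

Lemma Ex_le f g : bm f -> bm g -> (forall w, f w <= g w) -> Ex f <= Ex g.
Proof.
move=> bf bg fg; rewrite -lee_fin !ExE //.
apply: le_integral => //; [exact: bm_int | exact: bm_int |].
by move=> w _; rewrite lee_fin.
Qed.

Lemma Ex_indic A : measurable A -> (Ex (\1_A))%:E = P A.
Proof. by move=> mA; rewrite ExE ?integral_indic ?setIT //; exact: bm_indic. Qed.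

Lemma Ex_ext f g : (forall w, f w = g w) -> Ex f = Ex g.
Proof. by move=> fg; congr Ex; apply/funext. Qed.

End expect.

Section key.
Context {R : realType} {d : measure_display} {Omega : measurableType d}.
Variable (P : probability Omega R).
Variable (G : set (set Omega)) (sG : sigma_algebra setT G) (GM : G `<=` measurable).
Variables (S : set Omega) (mS : measurable S) (z : Omega -> R).
Hypothesis mz : measurable_fun setT z.
Hypothesis z0 : forall w, 0 <= z w.
Hypothesis hS : forall B, G B -> P (B `&` S) = (\int[P]_(w in B) (z w)%:E)%E.
Local Notation GT := (g_sigma_algebraType G).
Import HBNNSimple.

Lemma GmeasE (B : set GT) : measurable B = G B.
Proof. by rewrite (measurable_g_measurableTypeE sG). Qed.

Lemma Gmeas_meas (f : Omega -> R) :
  measurable_fun (setT : set GT) f -> measurable_fun setT f.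
Proof.
move=> mf _ B mB; have := mf measurableT B mB.
by rewrite GmeasE => /GM.
Qed.

Lemma key_indic (B : set Omega) : G B ->
  (\int[P]_w (\1_B w * \1_S w)%:E = \int[P]_w (\1_B w * z w)%:E)%E.
Proof.
move=> GB; have mB := GM GB.
transitivity (\int[P]_w (\1_(B `&` S) w)%:E)%E.
  by apply: eq_integral => w _; rewrite indicI.
rewrite integral_indic ?setIT //; last exact: measurableI.
apply: (eq_trans (hS GB)); rewrite integral_mkcond; apply: eq_integral => w _.
by rewrite /patch indicE; case: ifPn => _; rewrite ?mul1r ?mul0r.
Qed.


Lemma key_nnsfun (h : {nnsfun GT >-> R}) :
  (\int[P]_w ((h : GT -> R) w * \1_S w)%:E = \int[P]_w ((h : GT -> R) w * z w)%:E)%E.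
Proof.
have hE := fimfunEord h.
set s := fset_set _ in hE.
have sge0 (i : 'I_#|`s|) : 0 <= s`_i.
  have : s`_i \in s by apply: mem_nth.
  rewrite in_fset_set; last exact: fimfunP.
  by move=> /set_mem [w _ <-]; exact: fun_ge0.
have Gi (i : 'I_#|`s|) : G (h @^-1` [set s`_i]).
  by rewrite -GmeasE; exact: measurable_funPTI.
have mi (i : 'I_#|`s|) : measurable_fun setT (\1_(h @^-1` [set s`_i]) : Omega -> R).
  exact/measurable_indic/GM.
transitivity (\sum_(i < #|`s|) (s`_i)%:E *
   \int[P]_w (\1_(h @^-1` [set s`_i]) w * \1_S w)%:E)%E.
  under eq_integral do rewrite hE mulr_suml -sumEFin.
  rewrite ge0_integral_sum //; last first.
  - move=> i w _; rewrite lee_fin -mulrA mulr_ge0 // mulr_ge0 //.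
  - move=> i; apply/measurable_EFinP; apply: measurable_funM => //.
    by apply: measurable_funM => //; exact: measurable_indic.
  apply: eq_bigr => i _; rewrite -ge0_integralZl ?lee_fin ?sge0 //;
    first by apply: eq_integral => w _; rewrite -EFinM mulrA.
  all: try by apply/measurable_EFinP; apply: measurable_funM => //; exact: measurable_indic.
  all: try by move=> w _; rewrite lee_fin mulr_ge0.
transitivity (\sum_(i < #|`s|) (s`_i)%:E *
   \int[P]_w (\1_(h @^-1` [set s`_i]) w * z w)%:E)%E.
  by apply: eq_bigr => i _; rewrite key_indic.
under [RHS]eq_integral do rewrite hE mulr_suml -sumEFin.
rewrite ge0_integral_sum //; last first.
- move=> i w _; rewrite lee_fin -mulrA mulr_ge0 // mulr_ge0 //.
- move=> i; apply/measurable_EFinP; apply: measurable_funM => //.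
  by apply: measurable_funM.
apply: eq_bigr => i _; rewrite -ge0_integralZl ?lee_fin ?sge0 //;
  first by apply: eq_integral => w _; rewrite -EFinM mulrA.
all: try by apply/measurable_EFinP; apply: measurable_funM.
all: try by move=> w _; rewrite lee_fin mulr_ge0.
Qed.


Lemma mc_aux (Y : Omega -> R) (h : nat -> Omega -> R)
  (mh : forall n, measurable_fun setT (h n))
  (h0 : forall n w, 0 <= h n w)
  (ndh : forall w m n, (m <= n)%N -> h m w <= h n w)
  (hcvg : forall w, h ^~ w @ \oo --> Y w)
  (u : Omega -> R) (mu : measurable_fun setT u)
  (u0 : forall w, 0 <= u w) :
  (\int[P]_w (Y w * u w)%:E =
   limn (fun n => \int[P]_w (h n w * u w)%:E))%E.
Proof.
rewrite -monotone_convergence //.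
- apply: eq_integral => w _; apply/esym/cvg_lim => //.
  apply: cvg_EFin; first by near=> n.
  by apply: cvgMl; exact: hcvg.
- by move=> n; apply/measurable_EFinP; exact: measurable_funM.
- by move=> n w _; rewrite lee_fin mulr_ge0.
- by move=> w _ m n mn; rewrite lee_fin ler_wpM2r // ndh.
Unshelve. all: by end_near.
Qed.

Lemma key_ge0 (Y : Omega -> R) (mY : measurable_fun (setT : set GT) Y)
  (Y0 : forall w, 0 <= Y w) :
  (\int[P]_w (Y w * \1_S w)%:E = \int[P]_w (Y w * z w)%:E)%E.
Proof.
have mYE : measurable_fun (setT : set GT) (EFin \o Y) by apply/measurable_EFinP.
pose h n : Omega -> R := (nnsfun_approx (@measurableT _ GT) mYE n : GT -> R).
have mh n : measurable_fun setT (h n).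
  by apply: Gmeas_meas; exact: measurable_funPT.
have h0 n w : 0 <= h n w by exact: fun_ge0.
have ndh w m n : (m <= n)%N -> h m w <= h n w.
  by move=> mn; move/lefP: (nd_nnsfun_approx (@measurableT _ GT) mYE mn); apply.
have hcvg w : h ^~ w @ \oo --> Y w.
  have Y0' : forall x : GT, setT x -> (0 <= (EFin \o Y) x)%E.
    by move=> x _; rewrite lee_fin.
  have /fine_cvg := @cvg_nnsfun_approx _ GT R setT (@measurableT _ GT)
    (EFin \o Y) mYE Y0' w Logic.I.
  exact.
have mS1 : measurable_fun setT (\1_S : Omega -> R) by exact: measurable_indic.
rewrite (mc_aux mh h0 ndh hcvg mS1) //.
rewrite (mc_aux mh h0 ndh hcvg mz) //.
by congr (lim (_ @ \oo)); apply/funext => n; exact: key_nnsfun.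
Qed.

Lemma key_bm (Y : Omega -> R) (mY : measurable_fun (setT : set GT) Y)
  (M : R) (hM : forall w, `|Y w| <= M) (z1 : forall w, z w <= 1) :
  Ex P (fun w => Y w * \1_S w) = Ex P (fun w => Y w * z w).
Proof.
have bY : bm Y by split; [exact: Gmeas_meas | exists M].
have bz : bm z by split => //; exists 1 => w; rewrite ger0_norm.
have bS : bm (\1_S : Omega -> R) by exact: bm_indic.
have Y0 w : 0 <= Y w + M.
  by have := hM w; rewrite ler_norml => /andP[h _]; lra.
have mY' : measurable_fun (setT : set GT) (fun w => Y w + M).
  by apply: measurable_funD => //; exact: measurable_cst.
have M0 : 0 <= M by exact: le_trans (hM point).
have mM : measurable_fun (setT : set GT) (fun _ : GT => M) by exact: measurable_cst.
have k1 := key_ge0 mY' Y0.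
have k2 := key_ge0 mM (fun=> M0).
have bYM : bm (fun w => Y w + M) by apply: bmD => //; exact: bm_cst.
have e1 : Ex P (fun w => (Y w + M) * \1_S w) = Ex P (fun w => (Y w + M) * z w).
  by apply: EFin_inj; rewrite !ExE //; apply: bmM.
have e2 : Ex P (fun w => M * \1_S w) = Ex P (fun w => M * z w).
  by apply: EFin_inj; rewrite !ExE //; apply: bmM => //; exact: bm_cst.
move: e1; rewrite (Ex_ext _ (fun w => mulrDl (Y w) M _)).
rewrite (Ex_ext _ (fun w => mulrDl (Y w) M (z w))).
rewrite !ExD; try (by apply: bmM => //; exact: bm_cst).
by rewrite e2 => /addIr.
Qed.

End key.

Section ExZ.
Context {R : realType} {d : measure_display} {Omega : measurableType d}.
Variable (P : probability Omega R).

Lemma ExZ k f : bm f -> Ex P (fun w => k * f w) = k * Ex P f.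
Proof.
move=> bf; apply: EFin_inj; rewrite EFinM !ExE //; last first.
  by apply: bmM => //; exact: bm_cst.
under eq_integral do rewrite EFinM.
by rewrite integralZl //; exact: bm_int.
Qed.

Lemma Ex_cst k : Ex P (fun _ => k) = k.
Proof.
apply: EFin_inj; rewrite ExE; last exact: bm_cst.
rewrite integral_cst //.
transitivity (k%:E * 1)%E; last exact: mule1.
by congr (_ * _)%E; exact: probability_setT.
Qed.

End ExZ.

Section bandit.
Context {R : realType} {d : measure_display} {Omega : measurableType d}.
Variables (P : probability Omega R) (K : nat) (F : nat -> set (set Omega))
  (A : nat -> Omega -> 'I_K) (x : nat -> Omega -> 'I_K -> R).
Hypothesis hd : draws_according P F A x.

Lemma hsig t : sigma_algebra setT (F t).
Proof. by case: hd => -[h _] _. Qed.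
Lemma hFM t : F t `<=` measurable.
Proof. by case: hd => -[_ [h _]] _. Qed.
Lemma hFS t : F t `<=` F t.+1.
Proof. by case: hd => -[_ [_ h]] _. Qed.
Lemma hmono s t : (s <= t)%N -> F s `<=` F t.
Proof.
elim: t => [|t IH]; first by rewrite leqn0 => /eqP ->.
rewrite leq_eqVlt => /predU1P[-> //|st].
by move=> B /(IH st) /hFS.
Qed.
Lemma hAm t a : F t [set w | A t w = a].
Proof. by case: hd => _ [h _]. Qed.
Lemma hpv t w : prob_vec (x t w).
Proof. by case: hd => _ [_ [h _]]. Qed.
Lemma hxm t a B : (0 < t)%N -> measurable B -> F t.-1 [set w | B (x t w a)].
Proof. by case: hd => _ [_ [_ [h _]]]; exact: h. Qed.
Lemma hcond t a B : (0 < t)%N -> F t.-1 B ->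
  P (B `&` [set w | A t w = a]) = (\int[P]_(w in B) (x t w a)%:E)%E.
Proof. by case: hd => _ [_ [_ [_ h]]]; exact: h. Qed.

Lemma x_ge0 t w a : 0 <= x t w a.
Proof. by case: (hpv t w). Qed.
Lemma x_le1 t w a : x t w a <= 1.
Proof.
case: (hpv t w) => h0 <-; rewrite (bigD1 a) //= lerDl.
by apply: sumr_ge0 => i _; exact: h0.
Qed.

Definition Fmeas t (f : Omega -> R) :=
  measurable_fun (setT : set (g_sigma_algebraType (F t))) f.

Lemma Fmeas_mono s t f : (s <= t)%N -> Fmeas s f -> Fmeas t f.
Proof.
move=> st mf _ B mB; have := mf measurableT B mB.
rewrite !(GmeasE (hsig _)) => /(hmono st).
by rewrite -(GmeasE (hsig _)).
Qed.

Lemma Fmeas_meas t f : Fmeas t f -> measurable_fun setT f.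
Proof. exact: (Gmeas_meas (hsig t) (@hFM t)). Qed.

Variable a : 'I_K.
Variable C : R.

Definition X t w := x t w a.
Definition I t : Omega -> R := \1_([set w | A t w = a]).
Definition Sx t w := \sum_(1 <= s < t.+1) X s w.
Definition c t w : R := \1_(`]-oo, C]%classic) (Sx t w).
Definition M t w := \sum_(1 <= s < t.+1) c s w * (I s w - X s w).
Definition V t w := \sum_(1 <= s < t.+1) c s w * (X s w * (1 - X s w)).

Lemma FmX t : Fmeas t (X t.+1).
Proof.
move=> _ B mB; rewrite setTI (GmeasE (hsig _)).
exact: (hxm a (ltn0Sn t) mB).
Qed.

Lemma FmI t : Fmeas t (I t).
Proof.
apply: measurable_indic; rewrite (GmeasE (hsig _)); exact: hAm.
Qed.

Lemma FmSx u t : (t <= u.+1)%N -> Fmeas u (Sx t).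
Proof.
elim: t => [_|t IH tu].
  rewrite (_ : Sx 0 = fun=> 0); first exact: measurable_cst.
  by apply/funext => w; rewrite /Sx big_geq.
rewrite (_ : Sx t.+1 = fun w => Sx t w + X t.+1 w).
  apply: measurable_funD; first by apply: IH; exact: ltnW.
  by apply: (@Fmeas_mono t u); [exact: tu | exact: FmX].
by apply/funext => w; rewrite /Sx big_nat_recr.
Qed.

Lemma Fmc u t : (t <= u.+1)%N -> Fmeas u (c t).
Proof.
move=> tu; apply: measurableT_comp; last exact: FmSx.
by apply: measurable_indic; exact: measurable_itv.
Qed.

Lemma FmM u t : (t <= u)%N -> Fmeas u (M t).
Proof.
elim: t => [_|t IH tu].
  rewrite (_ : M 0 = fun=> 0); first exact: measurable_cst.
  by apply/funext => w; rewrite /M big_geq.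
rewrite (_ : M t.+1 = fun w => M t w + c t.+1 w * (I t.+1 w - X t.+1 w)).
  apply: measurable_funD; first by apply: IH; exact: ltnW.
  apply: measurable_funM; first by apply: Fmc; exact: ltnW.
  apply: measurable_funB; first by apply: (@Fmeas_mono t.+1 u) => //; exact: FmI.
  by apply: (@Fmeas_mono t u); [exact: ltnW | exact: FmX].
by apply/funext => w; rewrite /M big_nat_recr.
Qed.

Lemma X0 t w : 0 <= X t w. Proof. exact: x_ge0. Qed.
Lemma X1 t w : X t w <= 1. Proof. exact: x_le1. Qed.

Lemma I01 t w : I t w = 0 \/ I t w = 1.
Proof. by rewrite /I indicE; case: (_ \in _); [right|left]. Qed.

Lemma c01 t w : c t w = 0 \/ c t w = 1.
Proof. by rewrite /c indicE; case: (_ \in _); [right|left]. Qed.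

Lemma bmX t : (0 < t)%N -> bm (X t).
Proof.
case: t => // t _; split; first exact: (Fmeas_meas (@FmX t)).
by exists 1 => w; rewrite ger0_norm ?X0 ?X1.
Qed.

Lemma bmI t : bm (I t).
Proof. by apply: bm_indic; exact: (hFM (hAm _ _)). Qed.

Lemma bmc t : bm (c t).
Proof.
split; first exact: (Fmeas_meas (@Fmc t t (leqnSn t))).
by exists 1 => w; case: (c01 t w) => ->; rewrite ?normr0 ?normr1.
Qed.

Lemma bm_sumn (f : nat -> Omega -> R) t : (forall s, (0 < s)%N -> bm (f s)) ->
  bm (fun w => \sum_(1 <= s < t.+1) f s w).
Proof.
move=> hf; elim: t => [|t IH].
  rewrite (_ : (fun w => _) = fun=> 0); first exact: bm_cst.
  by apply/funext => w; rewrite big_geq.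
rewrite (_ : (fun w => _) = fun w => \sum_(1 <= s < t.+1) f s w + f t.+1 w).
  by apply: bmD => //; exact: hf.
by apply/funext => w; rewrite big_nat_recr.
Qed.

Lemma bmMt t : bm (M t).
Proof.
apply: bm_sumn => s s0; apply: bmM; first exact: bmc.
by apply: bmB; [exact: bmI | exact: bmX].
Qed.

Lemma bmV t : bm (V t).
Proof.
apply: bm_sumn => s s0; apply: bmM; first exact: bmc.
apply: bmM; first exact: bmX.
by apply: bmB; [exact: bm_cst | exact: bmX].
Qed.

Lemma MS t w : M t.+1 w = M t w + c t.+1 w * (I t.+1 w - X t.+1 w).
Proof. by rewrite /M big_nat_recr. Qed.

Lemma VS t w : V t.+1 w = V t w + c t.+1 w * (X t.+1 w * (1 - X t.+1 w)).
Proof. by rewrite /V big_nat_recr. Qed.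

Lemma EMV t : Ex P (fun w => M t w ^+ 2 - V t w) = 0.
Proof.
elim: t => [|t IH].
  rewrite (@Ex_ext _ _ _ P _ (fun=> 0)) ?Ex_cst // => w.
  by rewrite /M /V !big_geq // expr2 mul0r subr0.
pose Y w := 2 * M t w * c t.+1 w + c t.+1 w * (1 - 2 * X t.+1 w).
have pw w : M t.+1 w ^+ 2 - V t.+1 w =
    (M t w ^+ 2 - V t w) + (Y w * I t.+1 w - Y w * X t.+1 w).
  rewrite /Y MS VS.
  by case: (c01 t.+1 w) => ->; case: (I01 t.+1 w) => ->; ring.
have bY : bm Y.
  apply: bmD; first by apply: bmM; [apply: bmM; [exact: bm_cst|exact: bmMt]|exact: bmc].
  apply: bmM; first exact: bmc.
  by apply: bmB; [exact: bm_cst | apply: bmM; [exact: bm_cst|exact: bmX]].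
have mY : Fmeas t Y.
  apply: measurable_funD.
    apply: measurable_funM; last exact: Fmc.
    by apply: measurable_funM; [exact: measurable_cst | exact: FmM].
  apply: measurable_funM; first exact: Fmc.
  apply: measurable_funB; first exact: measurable_cst.
  by apply: measurable_funM; [exact: measurable_cst | exact: FmX].
have hS B : F t B -> P (B `&` [set w | A t.+1 w = a]) =
    (\int[P]_(w in B) (x t.+1 w a)%:E)%E.
  exact: (hcond a (ltn0Sn t)).
case: (bY) => _ [MY hMY].
have k := key_bm (hsig t) (@hFM t) (hFM (hAm t.+1 a)) (Fmeas_meas (@FmX t))
  (fun w => X0 t.+1 w) hS mY hMY (fun w => X1 t.+1 w).
rewrite (Ex_ext _ pw) ExD; last 2 first.
- by apply: bmB; [apply: bmM; exact: bmMt | exact: bmV].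
- by apply: bmB; apply: bmM => //; [exact: bmI | exact: bmX].
rewrite IH add0r ExB; last 2 first.
- by apply: bmM => //; exact: bmI.
- by apply: bmM => //; exact: bmX.
by rewrite k subrr.
Qed.

Lemma SxS t w : Sx t.+1 w = Sx t w + X t.+1 w.
Proof. by rewrite /Sx big_nat_recr. Qed.

Lemma Sx_mono s t w : (s <= t)%N -> Sx s w <= Sx t w.
Proof.
elim: t => [|t IH]; first by rewrite leqn0 => /eqP ->.
rewrite leq_eqVlt => /predU1P[-> //|st].
by rewrite SxS (le_trans (IH st)) // lerDl X0.
Qed.

Lemma c_one t w : Sx t w <= C -> c t w = 1.
Proof. by move=> h; rewrite /c indicE mem_set //= in_itv /= h. Qed.

Lemma c_le t w : c t w = 1 -> Sx t w <= C.
Proof.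
rewrite /c indicE; case: (boolP (_ \in _)) => [/set_mem|_] /=.
  by rewrite in_itv /=.
by move/eqP; rewrite eq_sym oner_eq0.
Qed.

Lemma W_le t w : 0 <= C -> \sum_(1 <= s < t.+1) c s w * X s w <= C.
Proof.
move=> C0; elim: t => [|t IH]; first by rewrite big_geq.
rewrite big_nat_recr //=; case: (c01 t.+1 w) => hc.
  by rewrite hc mul0r addr0.
apply: le_trans (c_le hc); rewrite SxS hc mul1r lerD2r /Sx.
apply: ler_sum => s _; case: (c01 s w) => ->; rewrite ?mul0r ?mul1r ?X0 //.
Qed.

Lemma V_le t w : 0 <= C -> V t w <= C.
Proof.
move=> C0; apply: le_trans (W_le t w C0); apply: ler_sum => s _.
have h0 := X0 s w; have h1 := X1 s w.
by case: (c01 s w) => ->; rewrite ?mul0r ?mul1r //; nra.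
Qed.

Lemma meas_ge (f : Omega -> R) (e : R) : measurable_fun setT f ->
  measurable [set w | e <= f w].
Proof.
move=> mf; have := mf measurableT _ (measurable_itv `[e, +oo[).
rewrite setTI; congr measurable; apply/seteqP; split => w /=;
  by rewrite in_itv /= andbT.
Qed.

Lemma cheb t (e : R) : 0 < e -> 0 <= C ->
  (P [set w | (e <= `|M t w|)%R] <= (C / e ^+ 2)%:E)%E.
Proof.
move=> e0 C0.
have mMt : measurable_fun setT (M t) by exact: (Fmeas_meas (@FmM t t (leqnn t))).
have mE : measurable [set w | e <= `|M t w|].
  by apply: meas_ge; exact: measurableT_comp.
rewrite -Ex_indic // lee_fin ler_pdivlMr ?exprn_gt0 //.
have hMV : Ex P (fun w => M t w ^+ 2) = Ex P (V t).
  apply/eqP; rewrite -subr_eq0 -ExB ?EMV //; last exact: bmV.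
  by apply: bmM; exact: bmMt.
rewrite mulrC -ExZ; last exact: bm_indic.
apply: (le_trans (y := Ex P (fun w => M t w ^+ 2))).
  apply: Ex_le.
  - by apply: bmM; [exact: bm_cst | exact: bm_indic].
  - by apply: bmM; exact: bmMt.
  move=> w; rewrite indicE; case: (boolP (_ \in _)) => [/set_mem /= h|_].
    by rewrite mulr1 -[M t w ^+ 2]real_normK ?num_real // !expr2; exact (ler_pM (ltW e0) (ltW e0) h h).
  by rewrite mulr0 sqr_ge0.
rewrite hMV -[C](Ex_cst P); apply: Ex_le; [exact: bmV | exact: bm_cst |].
move=> w; exact: V_le.
Qed.

Lemma M_npulls T w : Sx T w <= C -> M T w = npulls A a T w - Sx T w.
Proof.
move=> h; rewrite /M /npulls /Sx -sumrB; apply: eq_big_nat => s /andP[_ sT].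
rewrite c_one ?mul1r; last by apply: le_trans h; apply: Sx_mono; rewrite -ltnS.
rewrite /I indicE; congr (_%:R - _).
by case: eqP => hA; [rewrite mem_set | rewrite memNset].
Qed.

Lemma mSx t : measurable_fun setT (Sx t).
Proof. exact: (Fmeas_meas (@FmSx t t (leqnSn t))). Qed.

Lemma mMt t : measurable_fun setT (M t).
Proof. exact: (Fmeas_meas (@FmM t t (leqnn t))). Qed.

Lemma npullsE T : npulls A a T = fun w => \sum_(1 <= s < T.+1) I s w.
Proof.
apply/funext => w; rewrite /npulls; apply: eq_bigr => s _.
rewrite /I indicE; congr (_%:R).
by case: eqP => hA; [rewrite mem_set | rewrite memNset].
Qed.

Lemma mnpulls T : measurable_fun setT (npulls (R := R) A a T).
Proof. by rewrite npullsE; case: (bm_sumn T (fun s _ => bmI s)). Qed.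

End bandit.


Section cvg_helpers.
Context {R : realType}.

Lemma ecvg0 (u : nat -> \bar R) : (forall n, (0 <= u n)%E) ->
  (forall η : R, 0 < η -> \forall n \near \oo, (u n <= η%:E)%E) ->
  u @ \oo --> 0%E.
Proof.
move=> u0 hu; have ufin : \forall n \near \oo, u n \is a fin_num.
  have := hu 1 ltr01; apply: filterS => n un1.
  by rewrite ge0_fin_numE // (le_lt_trans un1) // ltry.
apply/fine_cvgP; split => //.
apply/cvgr0Pnorm_le => η η0.
near=> n.
have fn : u n \is a fin_num by near: n.
have hn : (u n <= η%:E)%E by near: n; exact: hu.
rewrite /= ger0_norm ?fine_ge0 //.
by rewrite -lee_fin fineK.
Unshelve. all: by end_near.
Qed.

Lemma ev_le (u : nat -> \bar R) (l : R) : u @ \oo --> 0%E -> 0 < l ->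
  \forall n \near \oo, (u n <= l%:E)%E.
Proof.
move=> /fine_cvgP[hfin hcv] l0; near=> n.
have fn : u n \is a fin_num by near: n.
rewrite -(fineK fn) lee_fin; near: n; exact: (cvgr_le _ hcv _ l0).
Unshelve. all: by end_near.
Qed.

Lemma ev_lt (u : nat -> \bar R) (l : R) : u @ \oo --> 0%E -> 0 < l ->
  \forall n \near \oo, (u n < l%:E)%E.
Proof.
move=> /fine_cvgP[hfin hcv] l0; near=> n.
have fn : u n \is a fin_num by near: n.
rewrite -(fineK fn) lte_fin; near: n; exact: (cvgr_lt _ hcv _ l0).
Unshelve. all: by end_near.
Qed.

End cvg_helpers.

Unset Implicit Arguments.
Set Strict Implicit.

Theorem lemma2 (R : realType) (d : measure_display) (Omega : measurableType d)
  (P : probability Omega R) (K : nat) (F : nat -> set (set Omega))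
  (A : nat -> Omega -> 'I_K) (x : nat -> Omega -> 'I_K -> R) :
  draws_according P F A x ->
  (exists eps : nat -> R,
      (forall T, 0 < eps T) /\
      (fun T => T%:R * eps T) @ \oo --> +oo /\
      (forall T w a, (0 < T)%N -> eps T <= xbar x T w a)) ->
  (exists xstar : nat -> 'I_K -> R,
      (forall T, prob_vec (xstar T)) /\
      (forall T a, 0 < xstar T a) /\
      (forall a, cvg_in_prob P (fun T w => xbar x T w a / xstar T a) 1)) ->
  stable P A.
Proof.
move=> hd [eps [eps0 [epsT epsle]]] [xs [xspv [xspos xscvg]]] a.
pose xa T := xs T a.
pose N T : R := T%:R * xa T.
have xa0 T : 0 < xa T by exact: xspos.
pose r T w := xbar x T w a / xa T.
have rE T w : (0 < T)%N -> r T w = Sx x a T w / N T.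
  move=> T0; rewrite /r /xbar /N /Sx /X; field.
  by rewrite ?(gt_eqF (xa0 T)) ?pnatr_eq0 -?lt0n ?hT ?T0.
have mr T : measurable_fun setT (r T).
  apply: measurable_funM; last exact: measurable_cst.
  apply: measurable_funM; first exact: measurable_cst.
  exact: (mSx hd a T).
have mabs (f : Omega -> R) (c0 : R) : measurable_fun setT f ->
    measurable_fun setT (fun w => `|f w - c0|).
  move=> mf; apply: measurableT_comp => //.
  by apply: measurable_funB => //; exact: measurable_cst.
have evlow : \forall T \near \oo, eps T <= 2 * xa T.
  have h := ev_lt (xscvg a (1/2) (ltac:(lra) : (0:R) < 1/2)) ltr01.
  near=> T.
  have hT : (0 < T)%N by near: T; exists 1%N.
  have hP : (P [set w | (1/2 <= `|r T w - 1|)%R] < 1%:E)%E by near: T; exact: h.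
  have : [set w | (1/2 <= `|r T w - 1|)%R] != setT.
    apply/negP => /eqP hE; move: hP; rewrite hE.
    by rewrite (probability_setT P) ltxx.
  move=> /setTPn [w /negP]; rewrite -ltNge => hw.
  have h1 := epsle T w a hT.
  have : r T w < 3/2.
    by move: hw; rewrite ltr_norml => /andP[_]; lra.
  rewrite /r ltr_pdivrMr // => h2.
  by have := xa0 T; lra.
have Ny : N @ \oo --> +oo.
  apply/cvgryPge => A0.
  have h := (cvgryPge _).1 epsT (2 * A0).
  near=> T.
  have h1 : 2 * A0 <= T%:R * eps T by near: T; exact: h.
  have h2 : eps T <= 2 * xa T by near: T; exact: evlow.
  have h3 : (0 : R) <= T%:R by exact: ler0n.
  rewrite /N; nra.
exists N; split => //.
move=> e e0.
apply: ecvg0; first by move=> n; exact: measure_ge0.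
move=> η η0.
have η30 : 0 < η / 3 by rewrite divr_gt0.
have e20 : 0 < e / 2 by rewrite divr_gt0.
have h1 := ev_le (xscvg a (e/2) e20) η30.
have h2 := ev_le (xscvg a 1 ltr01) η30.
have h3 := (cvgryPge _).1 Ny (24 / (e ^+ 2 * η)).
near=> T.
have hT : (0 < T)%N by near: T; exists 1%N.
have NT : 0 < N T by rewrite /N mulr_gt0 // ltr0n.
have hE1 : (P [set w | (e / 2 <= `|r T w - 1|)%R] <= (η / 3)%:E)%E by near: T; exact: h1.
have hE2 : (P [set w | (1 <= `|r T w - 1|)%R] <= (η / 3)%:E)%E by near: T; exact: h2.
have hN : 24 / (e ^+ 2 * η) <= N T by near: T; exact: h3.
pose C := 2 * N T.
pose δ := e / 2 * N T.
have δ0 : 0 < δ by rewrite mulr_gt0.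
have hE3 := cheb hd a T δ0 (C := C) (ltW (mulr_gt0 (ltac:(lra) : (0:R) < 2) NT) : 0 <= C).
have hC : C / δ ^+ 2 <= η / 3.
  have e2η : 0 < e ^+ 2 * η by rewrite mulr_gt0 // exprn_gt0.
  have k : 24 <= e ^+ 2 * η * N T.
    by move: hN; rewrite ler_pdivrMr // => h; rewrite mulrC.
  rewrite -subr_ge0.
  have -> : η / 3 - C / δ ^+ 2 = (e ^+ 2 * η * N T - 24) / (3 * e ^+ 2 * N T).
    rewrite /C /δ; field.
    by rewrite (gt_eqF NT) (gt_eqF e0).
  by apply: divr_ge0; [rewrite subr_ge0 | rewrite !mulr_ge0 // ltW].
set E1 := [set w | (e / 2 <= `|r T w - 1|)%R] in hE1.
set E2 := [set w | (1 <= `|r T w - 1|)%R] in hE2.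
set E3 := [set w | (δ <= `|M A x a C T w|)%R] in hE3.
have mE1 : measurable E1 by apply: meas_ge; exact: mabs.
have mE2 : measurable E2 by apply: meas_ge; exact: mabs.
have mE3 : measurable E3.
  apply: meas_ge; apply: measurableT_comp => //; exact: (mMt hd).
have mT : measurable [set w | (e <= `|npulls A a T w / N T - 1|)%R].
  apply: meas_ge; apply: mabs; apply: measurable_funM; last exact: measurable_cst.
  exact: (mnpulls hd).
have sub : [set w | (e <= `|npulls A a T w / N T - 1|)%R] `<=` E1 `|` E2 `|` E3.
  move=> w /= hw.
  case: (lerP (e / 2) `|r T w - 1|) => he1; first by left; left.
  case: (lerP 1 `|r T w - 1|) => he2; first by left; right.
  right; rewrite /E3 /=.
  have hr := rE T w hT.
  have hS : Sx x a T w <= C.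
    move: he2; rewrite hr ltr_norml => /andP[_].
    rewrite ltrBlDr ltr_pdivrMr // => h; rewrite /C; lra.
  have hM := M_npulls hd hS.
  have key : npulls A a T w / N T - 1 =
      M A x a C T w / N T + (Sx x a T w / N T - 1).
    by rewrite hM; field; rewrite gt_eqF.
  move: hw; rewrite key -hr => hw.
  have := le_trans hw (ler_normD _ _).
  rewrite normrM normfV (gtr0_norm NT) => h.
  have hq : e / 2 < `|M A x a C T w| / N T by lra.
  by move: hq; rewrite ltr_pdivlMr // /δ => /ltW.
have mU : measurable (E1 `|` E2 `|` E3).
  by apply: measurableU => //; apply: measurableU.
apply: (le_trans (le_measure _ _ _ sub)); [exact: mem_set | exact: mem_set |].
have mE12 : measurable (E1 `|` E2) by exact: measurableU.
apply: (le_trans (measureU2 P mE12 mE3)).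
apply: (le_trans (leeD (measureU2 P mE1 mE2) (lexx _))).
have -> : η = η / 3 + η / 3 + η / 3 by field.
rewrite !EFinD; apply: leeD; first exact: leeD.
by apply: (le_trans hE3); rewrite lee_fin.
Unshelve. all: by end_near.
Qed.
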